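(* The rules (A1)–(A8) for approximate exclusion atoms are sound: if an approximate exclusion atom $\varphi$ is derivable from a set $\Sigma$ of approximate exclusion atoms using (A1)–(A8), then every team satisfying all atoms of $\Sigma$ satisfies $\varphi$.
   Context: A team $T$ is a finite set of assignments $s:\mathcal{V}\to M$ ($\mathcal{V}$ a set of variables, $M$ a set of values). Letters $x,y,z,u,v,w,\dots$ denote finite tuples of variables; juxtaposition denotes concatenation; $s(x)=\langle s(x_1),\dots,s(x_n)\rangle$. For $|x|=|y|$, $T\models x|y$ iff $s_1(x)\neq s_2(y)$ for all $s_1,s_2\in T$. For a real $0\le p\le 1$, the approximate exclusion atom $x|_p y$ is satisfied, $T\models x|_py$, iff there is $T'\subseteq T$ with $|T'|\le p\cdot|T|$ and $T\setminus T'\models x|y$. The rules (schemata over tuples, atoms well-formed) are: (A1) $x|_px\vdash y|_0z$ for $p<1$; (A2) $x|_py\vdash y|_px$; (A3) $x|_py\vdash xu|_pyv$; (A4) $xuu|_pyvv\vdash xu|_pyv$; (A5) $xyz|_puvw\vdash xzy|_puwv$ where $|x|=|u|$, $|y|=|v|$; (A6) $xw|_pyw\vdash zz|_pxy$; (A7) $x|_qy\vdash x|_py$ for $q\le p\le 1$; (A8) $\vdash x|_1y$. *)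

(* Defs.v *)
From Stdlib Require Import Reals List.
Import ListNotations.
Open Scope R_scope.

(* An assignment is a function V -> M; a tuple of variables is a list V and
   s(x) is [map s x]. A team is a finite set of assignments, represented as a
   duplicate-free list (so |T| = length T). *)

Definition assignment (V M : Type) := V -> M.

Record team (V M : Type) := mkTeam {
  tm_list : list (assignment V M);
  tm_nodup : NoDup tm_list }.
Arguments tm_list {V M}.

Record atom (V : Type) := mkAtom { ax : list V; ap : R; ay : list V }.
Arguments mkAtom {V}.
Arguments ax {V}. Arguments ap {V}. Arguments ay {V}.

Definition wf {V : Type} (a : atom V) : Prop :=
  length (ax a) = length (ay a) /\ 0 <= ap a <= 1.

Definition excl {V M : Type} (S : assignment V M -> Prop) (x y : list V) : Prop :=
  forall s1 s2, S s1 -> S s2 -> map s1 x <> map s2 y.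

Definition sat {V M : Type} (T : team V M) (a : atom V) : Prop :=
  exists T' : list (assignment V M),
    NoDup T' /\ incl T' (tm_list T) /\
    INR (length T') <= ap a * INR (length (tm_list T)) /\
    excl (fun s => In s (tm_list T) /\ ~ In s T') (ax a) (ay a).

Inductive ae_derivable {V : Type} (Sig : atom V -> Prop) : atom V -> Prop :=
| d_hyp : forall a, Sig a -> ae_derivable Sig a
| d_A1 : forall x p y z, p < 1 -> wf (mkAtom y 0 z) ->
    ae_derivable Sig (mkAtom x p x) -> ae_derivable Sig (mkAtom y 0 z)
| d_A2 : forall x p y, wf (mkAtom y p x) ->
    ae_derivable Sig (mkAtom x p y) -> ae_derivable Sig (mkAtom y p x)
| d_A3 : forall x p y u v, wf (mkAtom (x ++ u) p (y ++ v)) ->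
    ae_derivable Sig (mkAtom x p y) -> ae_derivable Sig (mkAtom (x ++ u) p (y ++ v))
| d_A4 : forall x u p y v, wf (mkAtom (x ++ u) p (y ++ v)) ->
    ae_derivable Sig (mkAtom (x ++ u ++ u) p (y ++ v ++ v)) ->
    ae_derivable Sig (mkAtom (x ++ u) p (y ++ v))
| d_A5 : forall x y z p u v w, length x = length u -> length y = length v ->
    wf (mkAtom (x ++ z ++ y) p (u ++ w ++ v)) ->
    ae_derivable Sig (mkAtom (x ++ y ++ z) p (u ++ v ++ w)) ->
    ae_derivable Sig (mkAtom (x ++ z ++ y) p (u ++ w ++ v))
| d_A6 : forall x w p y z, wf (mkAtom (z ++ z) p (x ++ y)) ->
    ae_derivable Sig (mkAtom (x ++ w) p (y ++ w)) ->
    ae_derivable Sig (mkAtom (z ++ z) p (x ++ y))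
| d_A7 : forall x q p y, q <= p -> p <= 1 -> wf (mkAtom x p y) ->
    ae_derivable Sig (mkAtom x q y) -> ae_derivable Sig (mkAtom x p y)
| d_A8 : forall x y, wf (mkAtom x 1 y) -> ae_derivable Sig (mkAtom x 1 y).

(* Main.v *)
Require Import Defs.
From Stdlib Require Import Reals List Lra Lia Classical.
Import ListNotations.
Open Scope R_scope.

Lemma split_eq {A B} (f g : A -> B) a b c d :
  length a = length c -> map f (a ++ b) = map g (c ++ d) ->
  map f a = map g c /\ map f b = map g d.
Proof.
  revert c; induction a as [|h a IH]; intros [|h' c]; simpl; intros Hl He;
    try discriminate; auto.
  injection He; intros He2 He1.
  destruct (IH c ltac:(lia) He2) as [E1 E2]. split; [f_equal|]; auto.
Qed.

Lemma der_wf (V : Type) (Sig : atom V -> Prop) (phi : atom V) :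
  (forall a, Sig a -> wf a) -> ae_derivable Sig phi -> wf phi.
Proof. intros HS D; destruct D; auto. Qed.

Theorem lemma3 (V M : Type) (Sig : atom V -> Prop) (phi : atom V) :
  (forall a, Sig a -> wf a) ->
  ae_derivable Sig phi ->
  forall T : team V M, (forall a, Sig a -> sat T a) -> sat T phi.
Proof.
  intros HS D.
  induction D as [a Ha|x p y z Hp Hw D IH|x p y Hw D IH|x p y u v Hw D IH
    |x u p y v Hw D IH|x y z p u v w Hxu Hyv Hw D IH|x w p y z Hw D IH
    |x q p y Hqp Hp1 Hw D IH|x y Hw]; intros T HT.
  - auto.
  - destruct (IH T HT) as [T' [Hn [Hi [Hl He]]]].
    unfold excl in He; simpl in *.
    assert (Hinc : incl (tm_list T) T').
    { intros s Hs. destruct (classic (In s T')) as [h|h]; auto.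
      exfalso. apply (He s s (conj Hs h) (conj Hs h)); reflexivity. }
    pose proof (NoDup_incl_length (tm_nodup _ _ T) Hinc) as Hlen.
    apply le_INR in Hlen.
    assert (Hz : INR (length (tm_list T)) = 0).
    { pose proof (pos_INR (length (tm_list T))).
      assert (Hm : (1 - p) * INR (length (tm_list T)) <= 0) by lra.
      assert (0 < 1 - p) by lra.
      destruct (Rle_lt_or_eq_dec _ _ H) as [Hlt|]; auto. nra. }
    change 0 with (INR 0) in Hz. apply INR_eq in Hz.
    unfold sat. destruct (tm_list T) eqn:E; [|discriminate].
    exists []. simpl. repeat split.
    + constructor.
    + intros s []. 
    + simpl; lra.
    + intros s1 s2 [[] _].
  - destruct (IH T HT) as [T' [Hn [Hi [Hl He]]]].
    exists T'; repeat split; auto.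
    intros s1 s2 H1 H2 E. apply (He s2 s1 H2 H1); auto.
  - destruct (IH T HT) as [T' [Hn [Hi [Hl He]]]].
    pose proof (der_wf _ _ _ HS D) as [Hw' _]; simpl in Hw'.
    exists T'; repeat split; auto.
    intros s1 s2 H1 H2 E. simpl in E.
    apply split_eq in E; auto. apply (He s1 s2 H1 H2); tauto.
  - destruct (IH T HT) as [T' [Hn [Hi [Hl He]]]].
    pose proof (der_wf _ _ _ HS D) as [Hw' _]; simpl in Hw'.
    destruct Hw as [Hw _]; simpl in Hw.
    rewrite ?length_app in Hw, Hw'; rewrite ?length_app in Hw'.
    exists T'; repeat split; auto.
    intros s1 s2 H1 H2 E. simpl in E.
    rewrite ?length_app in Hw'. assert (L1 : length x = length y) by lia.
    destruct (split_eq s1 s2 _ _ _ _ L1 E) as [E1 E2].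
    apply (He s1 s2 H1 H2); simpl. rewrite !map_app, E1, E2; reflexivity.
  - destruct (IH T HT) as [T' [Hn [Hi [Hl He]]]].
    destruct Hw as [Hw _]; simpl in Hw. rewrite ?length_app in Hw; rewrite ?length_app in Hw.
    exists T'; repeat split; auto.
    intros s1 s2 H1 H2 E. simpl in E.
    assert (L1 : length x = length u) by lia.
    destruct (split_eq s1 s2 _ _ _ _ L1 E) as [E1 E'].
    assert (L2 : length z = length w) by lia.
    destruct (split_eq s1 s2 _ _ _ _ L2 E') as [E2 E3].
    apply (He s1 s2 H1 H2); simpl. rewrite !map_app, E1, E2, E3; reflexivity.
  - destruct (IH T HT) as [T' [Hn [Hi [Hl He]]]].
    pose proof (der_wf _ _ _ HS D) as [Hw' _]; simpl in Hw'.
    destruct Hw as [Hw _]; simpl in Hw.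
    rewrite ?length_app in Hw, Hw'; rewrite ?length_app in Hw'.
    exists T'; repeat split; auto.
    intros s1 s2 H1 H2 E. simpl in E.
    assert (L1 : length z = length x) by lia.
    destruct (split_eq s1 s2 _ _ _ _ L1 E) as [E1 E2].
    apply (He s2 s2 H2 H2); simpl. rewrite !map_app, <- E1, <- E2; reflexivity.
  - destruct (IH T HT) as [T' [Hn [Hi [Hl He]]]].
    exists T'; repeat split; auto. simpl in *.
    pose proof (pos_INR (length (tm_list T))). nra.
  - exists (tm_list T). repeat split.
    + apply tm_nodup.
    + apply incl_refl.
    + simpl; lra.
    + intros s1 s2 [_ []] _. auto.
Qed.
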